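(* Let $H_1,\dots,H_k$ be linear subspaces of $\mathbb{R}^n$ with $1\le\dim H_j\le n-2$ for $j=1,\dots,k$. The following statements are equivalent. (i) $H_1^\perp+\cdots+H_k^\perp=\mathbb{R}^n$, and $\{H_1^\perp,\dots,H_k^\perp\}$ cannot be partitioned into two nonempty subsets such that every subspace in one is orthogonal to every subspace in the other. (ii) If $E\subset S^{n-1}$ is nonempty and closed, and for each $j=1,\dots,k$ and each $x\in E$ we have $S^{n-1}\cap(H_j^\perp+x)\subset E$, then $E=S^{n-1}$. (iii) If $F\subset\mathbb{R}^n$ is closed and invariant under every rotation that fixes $H_j$, for each $j=1,\dots,k$, then $F$ is a union of spheres centered at the origin. (iv) If $K$ is a convex body in $\mathbb{R}^n$ that is rotationally symmetric with respect to $H_j$ for each $j=1,\dots,k$, then $K$ is a ball centered at the origin.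
   Context: $H^\perp$ is the orthogonal complement of $H$; $S^{n-1}$ is the unit sphere. A rotation fixing $H$ is an element of $SO(n)$ acting as the identity on $H$. A set $X$ is rotationally symmetric with respect to an $i$-dimensional subspace $H$ if for every $x\in H$, $X\cap(H^\perp+x)$ is a union of $(n-i-1)$-dimensional spheres each centered at $x$ (equivalently, $X$ is invariant under every element of $SO(n)$ fixing $H$ pointwise). A convex body is a compact convex set with nonempty interior. *)

(* Defs.v *)
(* R^n is modelled as the row vectors 'rV[R]_n over an arbitrary real
   field R : realType; linear subspaces are row spaces of square matrices
   (mxalgebra, %MS).  Points act on the right: x |-> x *m Q. *)
From HB Require Import structures.
From mathcomp Require Import all_boot all_order all_algebra.
From mathcomp Require Import all_classical all_reals all_analysis.
Set Implicit Arguments. Unset Strict Implicit. Unset Printing Implicit Defensive.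
Import Order.TTheory GRing.Theory Num.Theory.
Local Open Scope classical_set_scope.
Local Open Scope ring_scope.

Definition dotv (R : realType) (n : nat) (u v : 'rV[R]_n) : R := (u *m v^T) 0 0.

Definition perp (R : realType) (n : nat) (H : 'M[R]_n) : 'M[R]_n := kermx H^T.

Definition orthsp (R : realType) (n : nat) (A B : 'M[R]_n) : Prop :=
  forall u v : 'rV[R]_n, (u <= A)%MS -> (v <= B)%MS -> dotv u v = 0.

Definition sphere (R : realType) (n : nat) : set 'rV[R]_n :=
  [set x | dotv x x = 1].

Definition rotation (R : realType) (n : nat) (Q : 'M[R]_n) : Prop :=
  Q *m Q^T = 1%:M /\ \det Q = 1.

Definition fixes (R : realType) (n : nat) (Q H : 'M[R]_n) : Prop :=
  forall v : 'rV[R]_n, (v <= H)%MS -> v *m Q = v.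

(* X is rotationally symmetric with respect to the subspace H:
   for every x in H, X ∩ (H^⊥ + x) is a union of spheres (in x + H^⊥)
   centered at x, i.e. membership of y ∈ x + H^⊥ in X only depends on |y - x|. *)
Definition rot_symmetric (R : realType) (n : nat) (H : 'M[R]_n)
    (X : set 'rV[R]_n) : Prop :=
  forall x y z : 'rV[R]_n, (x <= H)%MS ->
    (y - x <= perp H)%MS -> (z - x <= perp H)%MS ->
    dotv (y - x) (y - x) = dotv (z - x) (z - x) -> X y -> X z.

(* topology on R^n: the product (matrix) topology of R, which coincides with
   the Euclidean one; the cast to R^o is only needed for instance inference *)
Definition convex_body (R : realType) (n : nat) (K : set 'rV[R]_n) : Prop :=
  compact (K : set 'rV[R^o]_n) /\ convex_set (K : set (convex_lmodType 'rV[R]_n)) /\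
  (K : set 'rV[R^o]_n)° !=set0.

(* Main.v *)
Require Import Defs.
From HB Require Import structures.
From mathcomp Require Import all_boot all_order all_algebra.
From mathcomp Require Import all_classical all_reals all_analysis.
Import Order.TTheory GRing.Theory Num.Theory.
Local Open Scope classical_set_scope.
Local Open Scope ring_scope.
From mathcomp Require Import zify ring lra.
Set Implicit Arguments. Unset Strict Implicit. Unset Printing Implicit Defensive.


Section LinAlg.
Variables (R : realType) (n : nat).
Implicit Types (u v w x y z : 'rV[R]_n) (U H : 'M[R]_n).

Lemma dotvE u v : dotv u v = \sum_i u 0 i * v 0 i.
Proof. by rewrite /dotv !mxE; apply: eq_bigr => i _; rewrite mxE. Qed.

Lemma dotvC u v : dotv u v = dotv v u.
Proof. by rewrite !dotvE; apply: eq_bigr => i _; rewrite mulrC. Qed.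

Lemma dotvDl u v w : dotv (u + v) w = dotv u w + dotv v w.
Proof. by rewrite !dotvE -big_split; apply: eq_bigr => i _; rewrite mxE mulrDl. Qed.

Lemma dotvZl a u v : dotv (a *: u) v = a * dotv u v.
Proof. by rewrite !dotvE mulr_sumr; apply: eq_bigr => i _; rewrite mxE mulrA. Qed.

Lemma dotvNl u v : dotv (- u) v = - dotv u v.
Proof. by rewrite -scaleN1r dotvZl mulN1r. Qed.

Lemma dotvBl u v w : dotv (u - v) w = dotv u w - dotv v w.
Proof. by rewrite dotvDl dotvNl. Qed.

Lemma dotvDr u v w : dotv w (u + v) = dotv w u + dotv w v.
Proof. by rewrite !(dotvC w) dotvDl. Qed.

Lemma dotvZr a u v : dotv v (a *: u) = a * dotv v u.
Proof. by rewrite !(dotvC v) dotvZl. Qed.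

Lemma dotvNr u v : dotv v (- u) = - dotv v u.
Proof. by rewrite !(dotvC v) dotvNl. Qed.

Lemma dotvBr u v w : dotv w (u - v) = dotv w u - dotv w v.
Proof. by rewrite !(dotvC w) dotvBl. Qed.

Lemma dotv0l v : dotv 0 v = 0.
Proof. by rewrite -(scale0r 0) dotvZl mul0r. Qed.

Lemma dotv0r v : dotv v 0 = 0.
Proof. by rewrite dotvC dotv0l. Qed.

Lemma dotv_ge0 u : 0 <= dotv u u.
Proof. by rewrite dotvE; apply: sumr_ge0 => i _; rewrite -expr2 sqr_ge0. Qed.

Lemma dotv_eq0 u : (dotv u u == 0) = (u == 0).
Proof.
apply/idP/idP => [|/eqP->]; last by rewrite dotv0l.
rewrite dotvE psumr_eq0; last by move=> i _; rewrite -expr2 sqr_ge0.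
move=> /allP H; apply/eqP/rowP => i; rewrite mxE.
move: (H i (mem_index_enum _)) => /implyP /(_ isT).
by rewrite mulf_eq0 orbb => /eqP.
Qed.

Lemma dotv_gt0 u : u != 0 -> 0 < dotv u u.
Proof. by move=> u0; rewrite lt_neqAle dotv_ge0 eq_sym dotv_eq0 u0. Qed.

Lemma dotv_mulmx u v (A : 'M[R]_n) : dotv (u *m A) v = dotv u (v *m A^T).
Proof. by rewrite /dotv trmx_mul trmxK mulmxA. Qed.

Lemma dotv_row u (A : 'M[R]_n) i : dotv u (row i A) = (u *m A^T) 0 i.
Proof. by rewrite /dotv !mxE; apply: eq_bigr => j _; rewrite !mxE. Qed.

Lemma perpP H v : reflect (forall w, (w <= H)%MS -> dotv v w = 0) (v <= perp H)%MS.
Proof.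
apply: (iffP sub_kermxP) => [vH w /submxP[D ->]|Hv].
  by rewrite dotvC dotv_mulmx vH dotv0r.
apply/rowP => i; rewrite [RHS]mxE -dotv_row Hv //.
exact: row_sub.
Qed.


Lemma nz_sub (A : 'M[R]_n) : (0 < \rank A)%N -> exists v, (v <= A)%MS /\ v != 0.
Proof.
move=> rA; have: A != 0 by rewrite -mxrank_eq0 -lt0n.
move=> A0; have: [exists i, row i A != 0].
  apply: contraNT A0; rewrite negb_exists => /forallP H.
  by apply/eqP/row_matrixP => i; rewrite row0; apply/eqP; move: (H i); rewrite negbK.
by case/existsP => i Hi; exists (row i A); split => //; exact: row_sub.
Qed.

Lemma cap_perp H : (H :&: perp H = 0)%MS.
Proof.
apply/eqP; rewrite -submx0; apply/row_subP => i; rewrite submx0.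
have: (row i (H :&: perp H) <= H :&: perp H)%MS by exact: row_sub.
rewrite sub_capmx => /andP[h1 /perpP h2].
by rewrite -dotv_eq0 h2.
Qed.

Lemma rank_perp H : \rank (perp H) = (n - \rank H)%N.
Proof. by rewrite /perp mxrank_ker mxrank_tr. Qed.

Lemma full_perp H : row_full (H + perp H)%MS.
Proof.
apply/eqP; have := mxrank_sum_cap H (perp H).
rewrite cap_perp mxrank0 addn0 rank_perp => ->.
by rewrite subnKC // rank_leq_col.
Qed.

Lemma decomp H v : exists a b, [/\ (a <= H)%MS, (b <= perp H)%MS & v = a + b].
Proof.
have: (v <= H + perp H)%MS by apply: submx_full; exact: full_perp.
by case/sub_addsmxP => -[a b] /= ->; exists (a *m H), (b *m perp H); split => //; apply: submxMl.
Qed.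

Lemma exists_orth U x : (2 <= \rank U)%N -> exists v, [/\ (v <= U)%MS, v != 0 & dotv v x = 0].
Proof.
move=> rU; pose K := kermx x^T.
have rK : (n <= \rank K + 1)%N.
  rewrite /K mxrank_ker mxrank_tr; have := rank_leq_row x; lia.
have rC : (0 < \rank (U :&: K))%N.
  have := mxrank_sum_cap U K; have := rank_leq_col (U + K)%MS; lia.
have [v [vC v0]] := nz_sub rC; move: vC; rewrite sub_capmx => /andP[vU /sub_kermxP vK].
exists v; split => //; rewrite /dotv vK mxE //.
Qed.

Definition refl (e : 'rV[R]_n) : 'M[R]_n := 1%:M - (2 / dotv e e) *: (e^T *m e).

Lemma mx11_mul (a : 'M[R]_1) (e : 'rV[R]_n) : a *m e = a 0 0 *: e.
Proof. by rewrite {1}[a]mx11_scalar mul_scalar_mx. Qed.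

Lemma mul_refl x e : x *m refl e = x - (2 * dotv x e / dotv e e) *: e.
Proof.
rewrite /refl mulmxBr mulmx1 -scalemxAr mulmxA mx11_mul scalerA.
by rewrite -/(dotv x e) mulrAC.
Qed.

Lemma mx_ext (A B : 'M[R]_n) : (forall x : 'rV[R]_n, x *m A = x *m B) -> A = B.
Proof. by move=> h; apply/row_matrixP => i; rewrite !rowE h. Qed.

Lemma refl_tr e : (refl e)^T = refl e.
Proof. by rewrite /refl linearB /= linearZ /= trmx1 trmx_mul trmxK. Qed.

Lemma refl_norm x e : e != 0 -> dotv (x *m refl e) (x *m refl e) = dotv x x.
Proof.
move=> e0; have ee := dotv_gt0 e0.
rewrite mul_refl dotvBl !dotvBr !dotvZl !dotvZr (dotvC e x).
rewrite -[LHS]addrA [X in _ + X = _](_ : _ = 0) ?addr0 //.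
by field; rewrite gt_eqF.
Qed.

Lemma refl_invol e : e != 0 -> refl e *m refl e = 1%:M.
Proof.
move=> e0; have ee := dotv_gt0 e0; apply: mx_ext => x.
rewrite mulmx1 mulmxA !mul_refl dotvBl dotvZl -addrA -opprD -scalerDl.
set a := (X in X *: e); have -> : a = 0 by rewrite /a; field; rewrite gt_eqF.
by rewrite scale0r oppr0 addr0.
Qed.

Lemma refl_orth x e : dotv x e = 0 -> x *m refl e = x.
Proof. by move=> h; rewrite mul_refl h mulr0 mul0r scale0r subr0. Qed.

Lemma refl_swap x y : dotv x x = dotv y y -> x != y -> x *m refl (x - y) = y.
Proof.
move=> hxy nxy; have e0 : x - y != 0 by rewrite subr_eq0.
have ee := dotv_gt0 e0.
have E : dotv (x - y) (x - y) = 2 * dotv x (x - y).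
  by rewrite dotvBl !dotvBr hxy (dotvC y x); ring.
rewrite mul_refl.
have -> : 2 * dotv x (x - y) / dotv (x - y) (x - y) = 1.
  by rewrite -E divff // gt_eqF.
by rewrite scale1r opprB addrC subrK.
Qed.

Lemma refl_conj e f : f != 0 -> refl (e *m refl f) = refl f *m refl e *m refl f.
Proof.
move=> f0; apply: mx_ext => x.
rewrite !mulmxA [x *m refl f *m refl e]mul_refl mulmxBl -scalemxAl.
rewrite -mulmxA refl_invol // mulmx1 mul_refl refl_norm //.
by rewrite dotv_mulmx refl_tr.
Qed.

Lemma det_refl e : e != 0 -> \det (refl e) = -1.
Proof.
move=> e0; have ee := dotv_gt0 e0.
set c := 2 / dotv e e.
pose A : 'M[R]_(n, 1) := c *: e^T.
have h1 : refl e = 1%:M - A *m e by rewrite /refl /A scalemxAl.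
pose M := block_mx (1%:M : 'M[R]_n) A e (1%:M : 'M[R]_1).
have hM1 : M = block_mx 1%:M 0 e 1%:M *m block_mx 1%:M A 0 (1%:M - e *m A).
  by rewrite mulmx_block ?mul1mx ?mul0mx ?mulmx0 ?mulmx1 ?addr0 ?add0r addrC subrK.
have hM2 : M = block_mx (1%:M - A *m e) A 0 1%:M *m block_mx 1%:M 0 e 1%:M.
  by rewrite mulmx_block ?mul1mx ?mul0mx ?mulmx0 ?mulmx1 ?addr0 ?add0r subrK.
have d1 : \det M = \det (1%:M - e *m A :'M[R]_1).
  by rewrite hM1 det_mulmx det_lblock det_ublock !det1 !mul1r.
have d2 : \det M = \det (refl e).
  by rewrite hM2 det_mulmx det_lblock det_ublock !det1 !mulr1 h1.
have eA : e *m A = (c * dotv e e)%:M.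
  by rewrite /A -scalemxAr {1}[e *m e^T]mx11_scalar scale_scalar_mx.
rewrite -d2 d1 eA [_ - _]mx11_scalar det_scalar1 !mxE eqxx /= ?mulr1n.
rewrite /c divfK ?gt_eqF //; lra.
Qed.

End LinAlg.


Section Grow.
Variables (R : realType) (n : nat) (P : 'rV[R]_n -> Prop).
Hypothesis hrefl : forall e f, e != 0 -> f != 0 -> P e -> P f -> P (e *m refl f).
Implicit Types (u v w x y z p q : 'rV[R]_n) (U : 'M[R]_n).

Definition allP U := forall u, (u <= U)%MS -> u != 0 -> P u.
Definition Fam U a q := forall p, (p <= U)%MS -> dotv p p = a -> P (p + q).
Definition Target U q := forall u s, (u <= U)%MS -> u + s *: q != 0 -> P (u + s *: q).

Lemma EX U u a m : (2 <= \rank U)%N -> (u <= U)%MS -> 0 < a -> m ^+ 2 <= a * dotv u u ->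
  exists p, [/\ (p <= U)%MS, dotv p p = a & dotv u p = m].
Proof.
move=> rU uU a0 hm; have [v [vU v0 vu]] := exists_orth u rU.
have vv := dotv_gt0 v0.
have [u00|u0] := eqVneq u 0.
  move: hm; rewrite u00 dotv0l mulr0 => hm.
  have -> : m = 0 by apply/eqP; rewrite -sqrf_eq0 eq_le hm sqr_ge0.
  exists (Num.sqrt (a / dotv v v) *: v); split.
  - by rewrite scalemx_sub.
  - by rewrite dotvZl dotvZr mulrA -expr2 sqr_sqrtr ?divfK ?gt_eqF // divr_ge0 // ltW.
  - by rewrite dotv0l.
have uu := dotv_gt0 u0.
set l := m / dotv u u.
have hl : 0 <= a - l ^+ 2 * dotv u u.
  have -> : l ^+ 2 * dotv u u = m ^+ 2 / dotv u u by rewrite /l; field; rewrite gt_eqF.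
  by rewrite subr_ge0 ler_pdivrMr.
exists (l *: u + Num.sqrt ((a - l ^+ 2 * dotv u u) / dotv v v) *: v); split.
- by rewrite addmx_sub // scalemx_sub.
- rewrite dotvDl !dotvDr !dotvZl !dotvZr (dotvC u v) vu !mulr0 !addr0 add0r.
  rewrite !mulrA -!expr2 (sqr_sqrtr (divr_ge0 hl (ltW vv))) divfK ?gt_eqF //.
  rewrite divfK ?gt_eqF // /l; field; by rewrite gt_eqF.
- by rewrite dotvDr !dotvZr (dotvC u v) vu mulr0 addr0 /l divfK // gt_eqF.
Qed.


Lemma subB_sub (C : 'M[R]_n) (a b : 'rV[R]_n) :
  (a <= C)%MS -> (b <= C)%MS -> (a - b <= C)%MS.
Proof. by move=> ha hb; rewrite addmx_sub // -scaleN1r scalemx_sub. Qed.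

Lemma step_P U a q u t p : allP U -> (q <= perp U)%MS -> Fam U a q -> 0 < a ->
  (u <= U)%MS -> u + t *: q != 0 -> (p <= U)%MS -> dotv p p = a ->
  2 * dotv u p = t * (a - dotv q q) -> P (u + t *: q).
Proof.
move=> aU qU fam a0 uU g0 pU pp hup.
have qp : dotv q p = 0 by move/perpP: qU; apply.
have qu : dotv q u = 0 by move/perpP: qU; apply.
have qq := dotv_ge0 q.
set f := p + q; have Pf : P f by exact: fam.
have ff : dotv f f = a + dotv q q.
  by rewrite /f dotvDl !dotvDr pp qp (dotvC p q) qp addr0 add0r.
have f0 : f != 0 by rewrite -dotv_eq0 ff gt_eqF // ltr_wpDr.
have gf : dotv (u + t *: q) f = dotv u p + t * dotv q q.
  by rewrite /f dotvDl !dotvDr !dotvZl (dotvC u q) qu qp mulr0 !addr0 add0r.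
have E : (u + t *: q) *m refl f = u - t *: p.
  rewrite mul_refl gf.
  have -> : 2 * (dotv u p + t * dotv q q) / dotv f f = t.
    rewrite ff mulrDr hup; field; rewrite gt_eqF // ltr_wpDr //.
  by rewrite /f scalerDr opprD addrACA subrr addr0.
set g' := u - t *: p.
have g'U : (g' <= U)%MS by apply: subB_sub => //; rewrite scalemx_sub.
have g'0 : g' != 0.
  by rewrite -dotv_eq0 /g' -E refl_norm // dotv_eq0.
have Pg' : P g' by exact: aU.
have -> : u + t *: q = g' *m refl f by rewrite /g' -E -mulmxA refl_invol // mulmx1.
exact: hrefl.
Qed.

Lemma fam_next U a q : allP U -> (2 <= \rank U)%N -> (q <= perp U)%MS -> Fam U a q -> 0 < a ->
  forall t a', 0 < a' -> t ^+ 2 * (a - dotv q q) ^+ 2 <= 4 * a * a' -> Fam U a' (t *: q).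
Proof.
move=> aU rU qU fam a0 t a' a'0 h u uU uu.
have qu : dotv q u = 0 by move/perpP: qU; apply.
have hm : (t * (a - dotv q q) / 2) ^+ 2 <= a * dotv u u.
  rewrite uu expr_div_n ler_pdivrMr ?exprn_gt0 //; move: h; rewrite exprMn; lra.
have [p [pU pp up]] := @EX U u a (t * (a - dotv q q) / 2) rU uU a0 hm.
apply: (@step_P U a q u t p) => //.
- rewrite -dotv_eq0 dotvDl !dotvDr !dotvZl !dotvZr uu qu (dotvC u q) qu !mulr0 !add0r.
  rewrite addr0 mulrA gt_eqF // ltr_wpDr // mulr_ge0 // ?dotv_ge0 // -expr2 sqr_ge0.
- by [].
- by rewrite up; field.
Qed.

Lemma target_full U a q : allP U -> (2 <= \rank U)%N -> (q <= perp U)%MS -> Fam U a q -> 0 < a ->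
  dotv q q = a -> Target U q.
Proof.
move=> aU rU qU fam a0 qq u s uU g0.
have hm : 0 ^+ 2 <= a * dotv u u by rewrite expr2 mul0r mulr_ge0 ?dotv_ge0 // ltW.
have [p [pU pp up]] := @EX U u a 0 rU uU a0 hm.
by apply: (@step_P U a q u s p) => //; rewrite up qq subrr !mulr0.
Qed.

Lemma target_scale U q t : t != 0 -> Target U (t *: q) -> Target U q.
Proof.
move=> t0 T u s uU g0.
have -> : s *: q = (s / t) *: (t *: q) by rewrite scalerA divfK.
by apply: T => //; rewrite scalerA divfK.
Qed.

Lemma finish U a q : allP U -> (2 <= \rank U)%N -> (q <= perp U)%MS -> Fam U a q -> 0 < a ->
  q != 0 -> (a - dotv q q) ^+ 2 <= 4 * a * dotv q q -> Target U q.
Proof.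
move=> aU rU qU fam a0 q0 h.
have b0 := dotv_gt0 q0; set b := dotv q q in h b0 *.
have ab : 0 < a / b by rewrite divr_gt0.
set t := Num.sqrt (a / b).
have t2 : t ^+ 2 = a / b by rewrite sqr_sqrtr // ltW.
have t0 : t != 0 by rewrite sqrtr_eq0 -ltNge.
apply: (target_scale t0); apply: (@target_full _ a) => //.
- by rewrite scalemx_sub.
- apply: (@fam_next U a q) => //; rewrite t2 -/b.
  have h' : (a - b) ^+ 2 / b <= 4 * a by rewrite ler_pdivrMr // -mulrA.
  rewrite (_ : a / b * (a - b) ^+ 2 = a * ((a - b) ^+ 2 / b)); last by rewrite mulrAC mulrA.
  by rewrite [X in _ <= X]mulrC ler_wpM2l // ltW.
- by rewrite dotvZl dotvZr mulrA -expr2 t2 divfK ?gt_eqF.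
Qed.


Lemma onestep U a q : allP U -> (2 <= \rank U)%N -> (q <= perp U)%MS -> Fam U a q -> 0 < a ->
  ~~ ((a - dotv q q) ^+ 2 <= 4 * a * dotv q q) ->
  Fam U a ((2 * a / (a - dotv q q)) *: q).
Proof.
move=> aU rU qU fam a0 h.
have ab : a - dotv q q != 0.
  apply: contraNneq h => ->; rewrite expr2 mul0r mulr_ge0 // ?dotv_ge0 //.
  by rewrite mulr_ge0 // ltW.
apply: (@fam_next U a q) => //.
rewrite (_ : _ * _ = 4 * a * a) //; field => //.
Qed.

Lemma iterate U : allP U -> (2 <= \rank U)%N -> forall N a q, Fam U a q -> 0 < a ->
  (q <= perp U)%MS -> q != 0 -> dotv q q <= a -> a <= N%:R * dotv q q -> Target U q.
Proof.
move=> aU rU; elim=> [|N IH] a q fam a0 qU q0 ba aN.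
  by move: aN; rewrite mul0r; lra.
have b0 := dotv_gt0 q0.
have [h|h] := boolP ((a - dotv q q) ^+ 2 <= 4 * a * dotv q q).
  exact: (@finish U a q).
have fam' := onestep aU rU qU fam a0 h.
set b := dotv q q in h ba aN b0 fam' *.
have ab : a - b != 0 by apply: contraNneq h => ->; rewrite expr2 mul0r; nra.
have d0 : 0 < (a - b) ^+ 2 by rewrite exprn_even_gt0.
set t := 2 * a / (a - b) in fam'.
have t0 : t != 0 by rewrite /t mulf_neq0 ?invr_eq0 // mulf_neq0 // gt_eqF.
have t2 : t ^+ 2 = 4 * a ^+ 2 / (a - b) ^+ 2 by rewrite /t; field.
have h4 : 4 * a * b < (a - b) ^+ 2 by rewrite ltNge.
apply: (target_scale t0); apply: (IH a (t *: q)) => //.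
- by rewrite scalemx_sub.
- by rewrite scaler_eq0 negb_or t0.
- rewrite dotvZl dotvZr mulrA -expr2 t2 -/b mulrAC ler_pdivrMr //.
  by nra.
  have dq : dotv (t *: q) (t *: q) = t ^+ 2 * b by rewrite dotvZl dotvZr mulrA -expr2.
  rewrite dq t2.
  case: N IH aN => [|N] IH aN.
    exfalso; move: aN; rewrite mul1r => aN; have eab : a = b by lra.
    by move: h4; rewrite eab subrr expr2 mul0r; nra.
  rewrite (_ : _ * _ = (N.+1%:R * 4 * a ^+ 2 * b) / (a - b) ^+ 2); last by field.
  rewrite ler_pdivlMr //.
  have N1 : 1 <= N.+1%:R :> R by rewrite ler1n.
  have hd : (a - b) ^+ 2 <= a * a by nra.
  have ha : a * a <= N.+2%:R * b * a by rewrite ler_pM2r //.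
  have hN : N.+2%:R <= 4 * N.+1%:R :> R.
    by rewrite (_ : N.+2 = N.+1 + 1)%N ?natrD; [lra | rewrite addn1].
  nra.
Qed.


Lemma fam_target U a q : allP U -> (2 <= \rank U)%N -> (q <= perp U)%MS -> Fam U a q -> 0 < a ->
  q != 0 -> Target U q.
Proof.
move=> aU rU qU fam a0 q0.
have b0 := dotv_gt0 q0.
have [ba|ab] := lerP (dotv q q) a.
  have hb : 0 <= a / dotv q q by rewrite divr_ge0 // ltW.
  apply: (@iterate U aU rU (Num.bound (a / dotv q q)) a q) => //.
  by rewrite -ler_pdivrMr // ltW // archi_boundP.
have [h|h] := boolP ((a - dotv q q) ^+ 2 <= 4 * a * dotv q q).
  exact: (@finish U a q).
have fam' := onestep aU rU qU fam a0 h.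
set b := dotv q q in h ab b0 fam' *.
have ab0 : a - b != 0 by rewrite subr_eq0 lt_eqF.
have d0 : 0 < (a - b) ^+ 2 by rewrite exprn_even_gt0.
set t := 2 * a / (a - b) in fam'.
have t0 : t != 0 by rewrite /t mulf_neq0 ?invr_eq0 // mulf_neq0 // gt_eqF.
have t2 : t ^+ 2 = 4 * a ^+ 2 / (a - b) ^+ 2 by rewrite /t; field.
have h4 : 4 * a * b < (a - b) ^+ 2 by rewrite ltNge.
have dq : dotv (t *: q) (t *: q) = t ^+ 2 * b by rewrite dotvZl dotvZr mulrA -expr2.
have tq0 : t *: q != 0 by rewrite scaler_eq0 negb_or t0.
have b'0 := dotv_gt0 tq0.
have hb : 0 <= a / dotv (t *: q) (t *: q) by rewrite divr_ge0 // ltW.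
apply: (target_scale t0).
apply: (@iterate U aU rU (Num.bound (a / dotv (t *: q) (t *: q))) a (t *: q)) => //.
- by rewrite scalemx_sub.
- by rewrite dq t2 mulrAC ler_pdivrMr //; nra.
- by rewrite -ler_pdivrMr // ltW // archi_boundP.
Qed.

Lemma grow U f : allP U -> (2 <= \rank U)%N -> P f -> ~~ (f <= U)%MS ->
  (exists w, (w <= U)%MS /\ dotv f w != 0) -> allP (U + f)%MS.
Proof.
move=> aU rU Pf fU [w [wU fw]].
have [p [q [pU qU ef]]] := decomp U f.
have qp : forall x, (x <= U)%MS -> dotv q x = 0 by move/perpP: qU.
have q0 : q != 0 by apply: contraNneq fU => q0; rewrite ef q0 addr0.
have p0 : p != 0.
  apply: contraNneq fw => p0; rewrite ef p0 add0r qp //.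
have f0 : f != 0 by apply: contraNneq fU => ->; rewrite sub0mx.
have fam : Fam U (dotv p p) q.
  move=> p' p'U pp'.
  have [<-|np] := eqVneq p p'; first by rewrite -ef.
  have e0 : p - p' != 0 by rewrite subr_eq0.
  have Pe : P (p - p') by apply: aU => //; exact: subB_sub.
  have -> : p' + q = f *m refl (p - p').
    by rewrite ef mulmxDl refl_swap // refl_orth // qp // subB_sub.
  exact: hrefl.
have T := fam_target aU rU qU fam (dotv_gt0 p0) q0.
move=> g /sub_addsmxP [[u1 u2] /= ->] g0.
rewrite mx11_mul ef scalerDr addrA.
apply: T => //; last by rewrite -addrA -scalerDr -ef -mx11_mul.
by rewrite addmx_sub // ?submxMl // scalemx_sub.
Qed.

End Grow.

Section Core.
Variables (R : realType) (n k : nat) (P : 'rV[R]_n -> Prop) (Vs : 'I_k -> 'M[R]_n).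
Hypothesis hrefl : forall e f, e != 0 -> f != 0 -> P e -> P f -> P (e *m refl f).
Hypothesis hrk : forall j, (2 <= \rank (Vs j))%N.
Hypothesis hfull : row_full (\sum_j Vs j)%MS.
Hypothesis hconn : ~ (exists A : {set 'I_k}, A != finset.set0 /\ ~: A != finset.set0 /\
        forall i j, i \in A -> j \notin A -> orthsp (Vs i) (Vs j)).
Hypothesis hbase : forall j e, (e <= Vs j)%MS -> e != 0 -> P e.
Implicit Types (U : 'M[R]_n).

Lemma pick_f U : (exists j0, (Vs j0 <= U)%MS) -> ~~ row_full U ->
  exists f, [/\ P f, ~~ (f <= U)%MS & exists w, (w <= U)%MS /\ dotv f w != 0].
Proof.
move=> [j0 j0U] nU.
case: (pselect (exists j, ~~ (Vs j <= U)%MS /\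
   exists v w, [/\ (v <= Vs j)%MS, (w <= U)%MS & dotv v w != 0])).
  case=> j [nj [v2 [w [v2j wU vw]]]].
  have : [exists i, ~~ (row i (Vs j) <= U)%MS].
    apply: contraNT nj; rewrite negb_exists => /forallP H.
    by apply/row_subP => i; move: (H i); rewrite negbK.
  case/existsP => i v1U; set v1 := row i (Vs j) in v1U.
  have v1j : (v1 <= Vs j)%MS by exact: row_sub.
  have PV : forall v, (v <= Vs j)%MS -> ~~ (v <= U)%MS -> P v.
    by move=> v vj vU; apply: (hbase vj); apply: contraNneq vU => ->; rewrite sub0mx.
  have [v2U|v2U] := boolP (v2 <= U)%MS; last first.
    by exists v2; split => //; [exact: PV | exists w].
  case: (pselect (exists w', (w' <= U)%MS /\ dotv v1 w' != 0)) => [hw|hw].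
    by exists v1; split => //; exact: PV.
  have o1 : forall w', (w' <= U)%MS -> dotv v1 w' = 0.
    move=> w' w'U; apply/eqP/negPn/negP => h; apply: hw; exists w'; split => //; exact/negP.
  have fU : ~~ ((v1 + v2)%R <= U)%MS.
    by apply: contraNN v1U => h; have := subB_sub h v2U; rewrite addrK.
  exists (v1 + v2); split => //.
    by apply: PV => //; apply: addmx_sub.
  by exists w; split => //; rewrite dotvDl o1 // add0r.
move=> H; exfalso.
have orth : forall j, ~~ (Vs j <= U)%MS -> forall v w, (v <= Vs j)%MS -> (w <= U)%MS -> dotv v w = 0.
  move=> j nj v w vj wU; apply/eqP/negPn/negP => h; apply: H.
  by exists j; split => //; exists v, w; split => //; exact/negP.
have [allU|] := boolP [forall j, (Vs j <= U)%MS].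
  have hs : ((\sum_j Vs j) <= U)%MS.
    by apply/sumsmx_subP => j _; move/forallP: allU; apply.
  move: nU; rewrite /row_full eqn_leq rank_leq_col /= => /negP; apply.
  by apply: (leq_trans _ (mxrankS hs)); rewrite (eqP hfull).
rewrite negb_forall => /existsP [j1 nj1].
apply: hconn; exists ([set j | (Vs j <= U)%MS])%SET; split.
  by apply/set0Pn; exists j0; rewrite inE.
split; first by apply/set0Pn; exists j1; rewrite !inE.
move=> i j; rewrite !inE => iU jU u v ui vj.
by rewrite dotvC (orth j jU) // (submx_trans ui iU).
Qed.

Lemma core_all (hk : (0 < k)%N) : forall e, e != 0 -> P e.
Proof.
have main : forall d U, (n - \rank U <= d)%N -> allP P U -> (2 <= \rank U)%N ->
    (exists j0, (Vs j0 <= U)%MS) -> forall e, e != 0 -> P e.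
  elim=> [|d IH] U hd aU rU hj e e0.
    apply: aU => //; apply: submx_full; rewrite /row_full eqn_leq rank_leq_col /=.
    by rewrite -subn_eq0 -leqn0.
  have [fU|nU] := boolP (row_full U); first by apply: aU => //; exact: submx_full.
  have [f [Pf nf hw]] := pick_f hj nU.
  have aU' := grow hrefl aU rU Pf nf hw.
  have sU : (U <= U + f)%MS by exact: addsmxSl.
  have lt : (\rank U < \rank (U + f)%MS)%N.
    apply: rank_ltmx; rewrite ltmxE sU /=.
    by apply: contraNN nf => h; apply: submx_trans h; exact: addsmxSr.
  apply: (IH (U + f)%MS) => //.
  - by move: hd lt; have := rank_leq_col (U + f)%MS; lia.
  - exact: leq_trans rU (ltnW lt).
  - by case: hj => j0 h; exists j0; apply: submx_trans sU.
set j0 := Ordinal hk.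
apply: (main n (Vs j0)) => //.
- by rewrite leq_subr.
- by move=> u uj u0; apply: hbase uj u0.
- by exists j0.
Qed.

End Core.


Section Topo.
Variables (R : realType) (n : nat).
Local Notation V := ('rV[R^o]_n).

Lemma cont_add (f g : V -> R^o) : continuous f -> continuous g -> continuous (fun y => f y + g y).
Proof. by move=> hf hg x; exact: (continuousD (hf x) (hg x)). Qed.

Lemma cont_mul (f g : V -> R^o) : continuous f -> continuous g -> continuous (fun y => f y * g y).
Proof. by move=> hf hg x; exact: (continuousM (hf x) (hg x)). Qed.

Lemma cont_cst (c : R^o) : continuous (fun _ : V => c).
Proof. by move=> x; exact: cst_continuous. Qed.

Lemma cont_sum (I : Type) (s : seq I) (F : I -> V -> R^o) :
  (forall i, continuous (F i)) -> continuous (fun y => \sum_(i <- s) F i y).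
Proof.
move=> hF; elim: s => [|i s IH].
  by under eq_fun do rewrite big_nil; exact: cont_cst.
by under eq_fun do rewrite big_cons; exact: cont_add.
Qed.

Lemma cont_coord (A : 'M[R]_n) j : continuous (fun y : V => (y *m A) 0 j : R^o).
Proof.
under eq_fun do rewrite mxE.
apply: cont_sum => i; apply: cont_mul; last exact: cont_cst.
exact: coord_continuous.
Qed.

Lemma cont_dotvAB (A B : 'M[R]_n) : continuous (fun y : V => dotv (y *m A) (y *m B) : R^o).
Proof.
under eq_fun do rewrite dotvE.
by apply: cont_sum => i; apply: cont_mul; exact: cont_coord.
Qed.

Lemma cont_dotvv : continuous (fun y : V => dotv y y : R^o).
Proof. by under eq_fun do rewrite -[X in dotv X _]mulmx1 -[X in dotv _ X]mulmx1; exact: cont_dotvAB. Qed.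

Lemma closed_le_f (f : V -> R^o) (c : R) : continuous f -> closed [set y | f y <= c].
Proof. by move=> hf; have := @closed_comp _ _ f [set x : R^o | x <= c] (fun x _ => hf x) (@closed_le R c). Qed.

Lemma closed_eq_f (f : V -> R^o) (c : R) : continuous f -> closed [set y | f y = c].
Proof. by move=> hf; have := @closed_comp _ _ f [set x : R^o | x = c] (fun x _ => hf x) (@closed_eq R c). Qed.

Lemma open_lt_f (f : V -> R^o) (c : R) : continuous f -> open [set y | f y < c].
Proof. by move=> hf; have := @open_comp _ _ f [set x : R^o | x < c] (fun x _ => hf x) (@open_lt R c). Qed.

End Topo.


Lemma conv_lin (R : realType) n (x y : convex_lmodType 'rV[R]_n) (l : {i01 R}) :
  conv l x y = l%:num *: x + (1 - l%:num) *: y.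
Proof. by []. Qed.

Lemma ball_lemma (R : realType) n (hn : (0 < n)%N) (K : set 'rV[R]_n) :
  convex_body K -> (forall x y, K x -> dotv y y = dotv x x -> K y) ->
  exists r : R, 0 < r /\ K = [set y | dotv y y <= r ^+ 2].
Proof.
move=> [cK [cvK [x0 ix0]]] S.
have [y1 [Ky1 y10]] : exists y1 : 'rV[R]_n, K y1 /\ y1 != 0.
  have Kx0 : K x0 := nbhs_singleton ix0.
  have [x00|x00] := eqVneq (x0 : 'rV[R]_n) 0; last by exists x0.
  move: ix0 => /nbhs_ballP [e e0 he].
  have e0' : 0 < e := e0.
  pose c : 'rV[R]_n := const_mx (e / 2).
  exists ((x0 : 'rV[R]_n) + c); split.
    apply: he; rewrite -ball_normE /ball_ /= opprD addrA subrr add0r normrN.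
    rewrite /Num.norm /= mx_normrE; apply: bigmax_lt => //= ij _.
    by rewrite mxE ger0_norm; lra.
  rewrite x00 add0r; apply/negP => /eqP /rowP /(_ (Ordinal hn)); rewrite !mxE => h.
  by move: h => /eqP; rewrite gt_eqF // divr_gt0.
have Kne : (K : set 'rV[R^o]_n) !=set0 by exists y1.
have [c Kc cmax] := @compact_EVT_max _ R (fun y : 'rV[R^o]_n => dotv y y) (K : set 'rV[R^o]_n)
  Kne cK (continuous_subspaceT (@cont_dotvv R n)).
rewrite inE in Kc.
have cmax' : forall t, K t -> dotv t t <= dotv c c.
  by move=> t Kt; apply: cmax; rewrite inE.
set M := dotv c c in cmax'.
have M0 : 0 < M by apply: lt_le_trans (dotv_gt0 y10) (cmax' _ Ky1).
set r := Num.sqrt M.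
have r0 : 0 < r by rewrite sqrtr_gt0.
have r2 : r ^+ 2 = M by rewrite sqr_sqrtr // ltW.
have KN : forall t, K t -> K (- t).
  by move=> t Kt; apply: (S t) => //; rewrite dotvNl dotvNr opprK.
have convK : forall x y (l : R), 0 <= l -> l <= 1 -> K x -> K y -> K (l *: x + (1 - l) *: y).
  move=> x y l l0 l1 Kx Ky.
  have := cvK x y (Itv01 l0 l1); rewrite !inE => /(_ Kx Ky).
  by rewrite conv_lin.
have K0 : K 0.
  have h0 : 0 <= 1 / 2 :> R by lra.
  have h1 : 1 / 2 <= 1 :> R by lra.
  have := convK c (- c) _ h0 h1 Kc (KN _ Kc).
  have -> : 1 - 1 / 2 = 1 / 2 :> R by lra.
  by rewrite scalerN subrr.
exists r; split => //; apply/seteqP; split => y /=.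
  by move=> Ky; rewrite r2; exact: cmax'.
move=> yy; have [->|y0] := eqVneq y 0; first exact: K0.
have yy0 := dotv_gt0 y0.
set s := Num.sqrt (dotv y y).
have s0 : 0 < s by rewrite sqrtr_gt0.
have s2 : s ^+ 2 = dotv y y by rewrite sqr_sqrtr // ltW.
have sr : s <= r by rewrite /s /r ler_sqrt ?(ltW M0) // -r2.
set z := (r / s) *: y.
have Kz : K z.
  apply: (S c z Kc); rewrite /z dotvZl dotvZr mulrA -expr2 -s2 -/M -r2; field.
  by rewrite gt_eqF.
have l0 : 0 <= (1 + s / r) / 2 by apply: divr_ge0 => //; apply: addr_ge0 => //; apply: divr_ge0; apply: ltW.
have l1 : (1 + s / r) / 2 <= 1.
  rewrite ler_pdivrMr // mul1r; have : s / r <= 1 by rewrite ler_pdivrMr // mul1r.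
  lra.
have := convK z (- z) _ l0 l1 Kz (KN _ Kz).
congr K; rewrite /z scalerN -scalerBl !scalerA.
rewrite (_ : _ * _ = 1) ?scale1r //; field.
by rewrite !gt_eqF.
Qed.


Section Main.
Variables (R : realType) (n k : nat) (H : 'I_k -> 'M[R]_n).
Hypothesis hk : (0 < k)%N.
Hypothesis hdim : forall j, (1 <= \rank (H j))%N /\ (\rank (H j) <= n - 2)%N.

Definition condI := row_full (\sum_j perp (H j))%MS /\
   ~ (exists A : {set 'I_k}, A != finset.set0 /\ ~: A != finset.set0 /\
        forall i j, i \in A -> j \notin A -> orthsp (perp (H i)) (perp (H j))).

Lemma hrk j : (2 <= \rank (perp (H j)))%N.
Proof. by rewrite rank_perp; have := hdim j; lia. Qed.

Lemma n_pos : (0 < n)%N.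
Proof. by have := hdim (Ordinal hk); lia. Qed.

Lemma spheres : condI -> forall X : set 'rV[R]_n,
  (forall j e x, (e <= perp (H j))%MS -> e != 0 -> X x -> X (x *m refl e)) ->
  forall x y, X x -> dotv y y = dotv x x -> X y.
Proof.
move=> [hfull hconn] X hX.
pose P e := forall x, X x -> X (x *m refl e).
have hrefl : forall e f, e != 0 -> f != 0 -> P e -> P f -> P (e *m refl f).
  by move=> e f e0 f0 Pe Pf x Xx; rewrite refl_conj // !mulmxA; apply/Pf/Pe/Pf.
have core := @core_all R n k P (fun j => perp (H j)) hrefl hrk hfull hconn
  (fun j e ej e0 x Xx => hX j e x ej e0 Xx) hk.
move=> x y Xx yx; have [<-|nxy] := eqVneq x y; first by [].
by rewrite -(refl_swap (esym yx) nxy); apply: core => //; rewrite subr_eq0.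
Qed.

Lemma i_ii : condI ->
   (forall E : set 'rV[R]_n, E !=set0 -> closed (E : set 'rV[R^o]_n) -> E `<=` @sphere R n ->
      (forall j x y, E x -> (y - x <= perp (H j))%MS -> @sphere R n y -> E y) ->
      E = @sphere R n).
Proof.
move=> ci E [x0 Ex0] _ hsub hmv.
have S := spheres ci (X := E).
have {}S : forall x y, E x -> dotv y y = dotv x x -> E y.
  apply: S => j e x ej e0 Ex; apply: (hmv j x) => //.
    rewrite mul_refl addrAC subrr add0r -scaleNr; exact: scalemx_sub.
  by rewrite /sphere /= refl_norm //; exact: hsub.
apply/seteqP; split => // y sy; apply: (S x0) => //.
by rewrite sy (hsub _ Ex0).
Qed.

Lemma i_iii : condI ->
   (forall F : set 'rV[R]_n, closed (F : set 'rV[R^o]_n) ->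
      (forall j Q x, rotation Q -> fixes Q (H j) -> F x -> F (x *m Q)) ->
      forall x y, F x -> dotv y y = dotv x x -> F y).
Proof.
move=> ci F _ hF; apply: (spheres ci) => j e x ej e0 Fx.
have [b [bj b0 bx]] := exists_orth x (hrk j).
have bH : forall v, (v <= H j)%MS -> dotv v b = 0.
  by move=> v vH; rewrite dotvC; move/perpP: bj; apply.
have eH : forall v, (v <= H j)%MS -> dotv v e = 0.
  by move=> v vH; rewrite dotvC; move/perpP: ej; apply.
have -> : x *m refl e = x *m (refl b *m refl e).
  by rewrite mulmxA [x *m refl b]refl_orth // dotvC.
apply: (hF j (refl b *m refl e) x) => //; last first.
  by move=> v vH; rewrite mulmxA !refl_orth // ?bH ?eH.
split.
  rewrite trmx_mul !refl_tr mulmxA -(mulmxA (refl b)) refl_invol // mulmx1.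
  exact: refl_invol.
by rewrite det_mulmx !det_refl // mulrNN mulr1.
Qed.


Lemma sub_kerP (z : 'rV[R]_n) m (B : 'M[R]_(m, n)) :
  reflect (forall w, (w <= B)%MS -> dotv w z = 0) (B <= kermx z^T)%MS.
Proof.
apply: (iffP idP) => [hB w wB|hw].
  by have /sub_kermxP wz := submx_trans wB hB; rewrite /dotv wz mxE.
apply/row_subP => i; apply/sub_kermxP; apply/rowP => j.
by rewrite [j]ord1 [RHS]mxE -[LHS]/(dotv _ _) hw // row_sub.
Qed.

Lemma notI_W : ~ condI -> exists W : 'M[R]_n,
  [/\ exists w : 'rV[R]_n, (w <= W)%MS /\ w != 0, exists z : 'rV[R]_n, (z <= perp W)%MS /\ z != 0 &
      forall j, (perp (H j) <= W)%MS \/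
                (forall v w, (v <= perp (H j))%MS -> (w <= W)%MS -> dotv v w = 0)].
Proof.
move=> nI.
have nzV : forall j, exists v : 'rV[R]_n, (v <= perp (H j))%MS /\ v != 0.
  by move=> j; apply: nz_sub; have := hrk j; lia.
have [hf|hf] := boolP (row_full (\sum_j perp (H j))%MS).
  case: (pselect (exists A : {set 'I_k}, A != finset.set0 /\ ~: A != finset.set0 /\
        forall i j, i \in A -> j \notin A -> orthsp (perp (H i)) (perp (H j)))); last first.
    by move=> h; exfalso; apply: nI.
  move=> [A [/set0Pn [i0 i0A] [/set0Pn [j0 j0A] hA]]].
  rewrite inE in j0A.
  exists (\sum_(i in A) perp (H i))%MS; split.
  - have [w [wi w0]] := nzV i0; exists w; split => //.
    exact: (sumsmx_sup i0).
  - have [z [zj z0]] := nzV j0; exists z; split => //.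
    apply/perpP => w wW; rewrite dotvC.
    have : ((\sum_(i in A) perp (H i))%MS <= kermx z^T)%MS.
      apply/sumsmx_subP => i iA; apply/sub_kerP => u ui.
      exact: (hA i j0).
    by move/sub_kerP; apply.
  - move=> j; have [jA|jA] := boolP (j \in A); first by left; exact: (sumsmx_sup j).
    right => v w vj wW; rewrite dotvC.
    have : ((\sum_(i in A) perp (H i))%MS <= kermx v^T)%MS.
      apply/sumsmx_subP => i iA; apply/sub_kerP => u ui.
      exact: (hA i j).
    by move/sub_kerP; apply.
exists (\sum_j perp (H j))%MS; split.
- have [w [wi w0]] := nzV (Ordinal hk); exists w; split => //.
  exact: (sumsmx_sup (Ordinal hk)).
- apply: nz_sub; rewrite rank_perp.
  move: hf; rewrite /row_full; have := rank_leq_col (\sum_j perp (H j))%MS.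
  move=> h1 h2; rewrite subn_gt0 ltn_neqAle h1 andbT; exact: h2.
- by move=> j; left; exact: (sumsmx_sup j).
Qed.

Lemma normalize (v : 'rV[R]_n) : v != 0 ->
  dotv ((Num.sqrt (dotv v v))^-1 *: v) ((Num.sqrt (dotv v v))^-1 *: v) = 1.
Proof.
move=> v0; have vv := dotv_gt0 v0.
rewrite dotvZl dotvZr mulrA -expr2 exprVn sqr_sqrtr ?ltW // mulVf //.
by rewrite gt_eqF.
Qed.

Lemma ii_i :
   (forall E : set 'rV[R]_n, E !=set0 -> closed (E : set 'rV[R^o]_n) -> E `<=` @sphere R n ->
      (forall j x y, E x -> (y - x <= perp (H j))%MS -> @sphere R n y -> E y) ->
      E = @sphere R n) -> condI.
Proof.
move=> hii; case: (pselect condI) => // nI; exfalso.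
have [W [[w [wW w0]] [z [zW z0]] hj]] := notI_W nI.
pose E := [set y : 'rV[R]_n | dotv y y = 1 /\ (y <= perp W)%MS].
pose f := fun y : 'rV[R^o]_n => (dotv y y - 1) * (dotv y y - 1) +
   \sum_i (y *m W^T) 0 i * (y *m W^T) 0 i : R^o.
have Ef : E = [set y | f y = 0].
  apply/seteqP; split => y /=.
    move=> [yy /sub_kermxP yW]; rewrite /f yy subrr mul0r add0r.
    by rewrite big1 // => i _; rewrite yW mxE mul0r.
  move/eqP; rewrite paddr_eq0; last 2 first.
  - by rewrite -expr2 sqr_ge0.
  - by apply: sumr_ge0 => i _; rewrite -expr2 sqr_ge0.
  move=> /andP[h1 /eqP h2]; split.
    by move: h1; rewrite mulf_eq0 orbb subr_eq0 => /eqP.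
  apply/sub_kermxP/rowP => i; rewrite [RHS]mxE.
  have hge : forall i : 'I_n, true -> 0 <= (y *m W^T) 0 i * (y *m W^T) 0 i.
    by move=> i' _; rewrite -expr2 sqr_ge0.
  by have /eqP := psumr_eq0P hge h2 (i := i) isT; rewrite mulf_eq0 orbb => /eqP.
have cf : continuous f.
  apply: cont_add.
    by apply: cont_mul; apply: cont_add; first [exact: cont_dotvv | exact: cont_cst].
  by apply: cont_sum => i; apply: cont_mul; exact: cont_coord.
have hE := hii E.
have Esph : E = @sphere R n.
  apply: hE.
  - exists ((Num.sqrt (dotv z z))^-1 *: z); split; first exact: normalize.
    exact: scalemx_sub.
  - by rewrite Ef; exact: closed_eq_f.
  - by move=> y [].
  move=> j x y [xx xW] yx sy; split => //.
  have xo : forall u, (u <= W)%MS -> dotv x u = 0 by move/perpP: xW.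
  case: (hj j) => [jW|jo].
    have vW : (y - x <= W)%MS := submx_trans yx jW.
    have : dotv (y - x) (y - x) = 0.
      have xv : dotv x (y - x) = 0 by exact: xo.
      have id : dotv y y = dotv x x + 2 * dotv x (y - x) + dotv (y - x) (y - x).
        by rewrite !dotvBl !dotvBr (dotvC y x); ring.
      move: sy; rewrite /sphere /= id xx xv; lra.
    move/eqP; rewrite dotv_eq0 subr_eq0 => /eqP ->; exact: xW.
  have -> : y = x + (y - x) by rewrite addrC subrK.
  apply: addmx_sub => //; apply/perpP => u uW; exact: jo.
have w1 := normalize w0.
set w' := (Num.sqrt (dotv w w))^-1 *: w in w1.
have : E w' by rewrite Esph.
move=> [_ /perpP h]; move: (h w'); rewrite w1 => /(_ (scalemx_sub _ wW)) /eqP.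
by rewrite oner_eq0.
Qed.


Lemma iii_iv :
   (forall F : set 'rV[R]_n, closed (F : set 'rV[R^o]_n) ->
      (forall j Q x, rotation Q -> fixes Q (H j) -> F x -> F (x *m Q)) ->
      forall x y, F x -> dotv y y = dotv x x -> F y) ->
   (forall K : set 'rV[R]_n, convex_body K ->
      (forall j, rot_symmetric (H j) K) ->
      exists r : R, 0 < r /\ K = [set y | dotv y y <= r ^+ 2]).
Proof.
move=> hiii K cb rs.
have clK : closed (K : set 'rV[R^o]_n).
  by apply: compact_closed; [exact: norm_hausdorff | case: cb].
apply: (ball_lemma n_pos cb); apply: (hiii K clK).
move=> j Q x [QQ dQ] fQ Kx.
have [h [v [hH vH ex]]] := decomp (H j) x.
have orthQ : forall a b, dotv (a *m Q) (b *m Q) = dotv a b.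
  by move=> a b; rewrite dotv_mulmx -mulmxA QQ mulmx1.
have xQ : x *m Q = h + v *m Q by rewrite ex mulmxDl fQ.
have e1 : x - h = v by rewrite ex addrAC subrr add0r.
have e2 : x *m Q - h = v *m Q by rewrite xQ addrAC subrr add0r.
apply: (rs j h x (x *m Q)) => //; rewrite ?e1 ?e2 ?orthQ //.
apply/perpP => w wH; rewrite -(fQ w wH) orthQ.
by move/perpP: vH; apply.
Qed.

Lemma dot_pyth (a b : 'rV[R]_n) : dotv a b = 0 -> dotv (a + b) (a + b) = dotv a a + dotv b b.
Proof. by move=> h; rewrite dotvDl !dotvDr (dotvC b a) h addr0 add0r. Qed.

Lemma coord_sq_le (y : 'rV[R]_n) i : (y 0 i) ^+ 2 <= dotv y y.
Proof.
rewrite dotvE (bigD1 i) //= -expr2 lerDl; apply: sumr_ge0 => j _.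
by rewrite -expr2 sqr_ge0.
Qed.

Lemma convex_sq (a b : 'rV[R]_n) (l : R) : 0 <= l -> l <= 1 ->
  dotv a a <= 1 -> dotv b b <= 1 -> dotv (l *: a + (1 - l) *: b) (l *: a + (1 - l) *: b) <= 1.
Proof.
move=> l0 l1 ha hb.
have hab : 2 * dotv a b <= dotv a a + dotv b b.
  have := dotv_ge0 (a - b); rewrite dotvBl !dotvBr (dotvC b a); lra.
rewrite dotvDl !dotvDr !dotvZl !dotvZr (dotvC b a).
have h1 : l * dotv a a <= l by rewrite -[X in _ <= X]mulr1 ler_wpM2l.
have h2 : (1 - l) * dotv b b <= 1 - l by rewrite -[X in _ <= X]mulr1 ler_wpM2l // subr_ge0.
have h3 : 0 <= l * (1 - l) * (dotv a a + dotv b b - 2 * dotv a b).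
  by rewrite !mulr_ge0 ?subr_ge0.
lra.
Qed.

Lemma iv_i :
   (forall K : set 'rV[R]_n, convex_body K ->
      (forall j, rot_symmetric (H j) K) ->
      exists r : R, 0 < r /\ K = [set y | dotv y y <= r ^+ 2]) -> condI.
Proof.
move=> hiv; case: (pselect condI) => // nI; exfalso.
have [W [[w [wW w0]] [z [zW z0]] hj]] := notI_W nI.
set Pm := proj_mx W (perp W).
have capW := cap_perp W.
have PW : forall y : 'rV[R]_n, (y *m Pm <= W)%MS by move=> y; exact: proj_mx_sub.
have PC : forall y : 'rV[R]_n, (y - y *m Pm <= perp W)%MS.
  by move=> y; apply: proj_mx_compl_sub; apply: submx_full; exact: full_perp.
have Pid : forall a : 'rV[R]_n, (a <= W)%MS -> a *m Pm = a by move=> a aW; exact: proj_mx_id.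
have P0 : forall a : 'rV[R]_n, (a <= perp W)%MS -> a *m Pm = 0 by move=> a aW; exact: proj_mx_0.
have pyth : forall y : 'rV[R]_n, dotv y y = dotv (y *m Pm) (y *m Pm) + dotv (y - y *m Pm) (y - y *m Pm).
  move=> y; have o : dotv (y *m Pm) (y - y *m Pm) = 0.
    by rewrite dotvC; move/perpP: (PC y); apply.
  by have := dot_pyth o; rewrite (addrC (y *m Pm)) subrK.
pose g1 := fun y : 'rV[R]_n => dotv (y *m Pm) (y *m Pm).
pose g2 := fun y : 'rV[R]_n => dotv (y - y *m Pm) (y - y *m Pm).
pose K := [set y : 'rV[R]_n | g1 y <= 1 /\ g2 y <= 1].
have g2E : forall y, g2 y = dotv (y *m (1%:M - Pm)) (y *m (1%:M - Pm)).
  by move=> y; rewrite /g2 mulmxBr mulmx1.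
have cg1 : continuous (g1 : 'rV[R^o]_n -> R^o) by exact: (@cont_dotvAB R n Pm Pm).
have cg2 : continuous (g2 : 'rV[R^o]_n -> R^o).
  have -> : (g2 : 'rV[R^o]_n -> R^o) = (fun y => dotv (y *m (1%:M - Pm)) (y *m (1%:M - Pm))).
    by apply: funext => y; exact: g2E.
  exact: (@cont_dotvAB R n (1%:M - Pm) (1%:M - Pm)).
have cb : convex_body K.
  split; [|split].
  - apply: bounded_closed_compact.
      exists 2; split => // M hM y [Ky1 Ky2].
      have yy : dotv y y <= 2 by rewrite pyth; rewrite /g1 /g2 in Ky1 Ky2; lra.
      rewrite /Num.norm /= mx_normrE; apply: bigmax_le => //=; first lra.
      move=> [i0 i] _ /=; rewrite [i0]ord1.
      have := coord_sq_le y i; rewrite ler_norml => hi.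
      apply/andP; split; nra.
    rewrite (_ : (K : set 'rV[R^o]_n) = [set y | g1 y <= 1] `&` [set y | g2 y <= 1]) //.
    by apply: closedI; exact: closed_le_f.
  - move=> x y l; rewrite !inE => -[x1 x2] [y1 y2]; rewrite conv_lin; split.
      rewrite /g1 mulmxDl -!scalemxAl; apply: convex_sq => //; by case: l.
    rewrite /g2 mulmxDl -!scalemxAl opprD addrACA -!scalerBr.
    by apply: convex_sq => //; case: l.
  - exists 0; rewrite /interior.
    have O0 : ([set y | g1 y < 1] `&` [set y | g2 y < 1]) (0 : 'rV[R^o]_n).
      by rewrite /= /g1 /g2 mul0mx subrr !dotv0l ltr01.
    have Oo : open ([set y | g1 y < 1] `&` [set y | g2 y < 1] : set 'rV[R^o]_n).
      by apply: openI; exact: open_lt_f.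
    apply: (filterS _ (open_nbhs_nbhs (conj Oo O0))).
    by move=> y [h1 h2]; split; apply: ltW.
have rs : forall j, rot_symmetric (H j) K.
  move=> j x y z' xH yx zx dd [Ky1 Ky2].
  have ox : forall u : 'rV[R]_n, (u <= perp (H j))%MS -> dotv x u = 0.
    by move=> u uj; rewrite dotvC; move/perpP: uj; apply.
  have sq : forall u : 'rV[R]_n, (u - x <= perp (H j))%MS -> dotv u u = dotv x x + dotv (u - x) (u - x).
    by move=> u ux; have := dot_pyth (ox _ ux); rewrite (addrC x) subrK.
  have dz : dotv z' z' = dotv y y by rewrite (sq z') // (sq y) // dd.
  have dyz : (z' - y <= perp (H j))%MS.
    have -> : z' - y = (z' - x) - (y - x) by rewrite opprB addrA subrK.
    exact: subB_sub.
  have [e1 e2] : g1 z' = g1 y /\ g2 z' = g2 y.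
    case: (hj j) => [jW|jo].
      have dW : (z' - y <= W)%MS := submx_trans dyz jW.
      have ez : z' = y + (z' - y) by rewrite addrC subrK.
      have h2 : g2 z' = g2 y.
        by rewrite /g2 ez mulmxDl (Pid _ dW) opprD addrACA subrr addr0.
      split => //; move: (pyth z') (pyth y); rewrite -/(g1 z') -/(g2 z') -/(g1 y) -/(g2 y) dz h2.
      by move=> -> /addIr.
    have dW : (z' - y <= perp W)%MS by apply/perpP => u uW; exact: jo.
    have ez : z' = y + (z' - y) by rewrite addrC subrK.
    have h1 : g1 z' = g1 y by rewrite /g1 ez mulmxDl (P0 _ dW) addr0.
    split => //; move: (pyth z') (pyth y); rewrite -/(g1 z') -/(g2 z') -/(g1 y) -/(g2 y) dz h1.
    by move=> -> /addrI.
  by rewrite /K /= e1 e2.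
have [r [r0 Kr]] := hiv K cb rs.
have w1 := normalize w0; set w' := _ *: w in w1.
have z1 := normalize z0; set z'' := _ *: z in z1.
have w'W : (w' <= W)%MS by exact: scalemx_sub.
have z'W : (z'' <= perp W)%MS by exact: scalemx_sub.
have wz : dotv w' z'' = 0 by rewrite dotvC; move/perpP: z'W; apply.
have Ky0 : K (w' + z'').
  rewrite /K /= /g1 /g2 mulmxDl Pid // P0 // addr0 addrC addKr w1 z1.
  by split.
have : dotv (w' + z'') (w' + z'') <= r ^+ 2 by move: Ky0; rewrite Kr.
rewrite dotvDl !dotvDr wz (dotvC z'' w') wz w1 z1 addr0 add0r => h2.
have Ky1 : K (Num.sqrt 2 *: w').
  rewrite Kr /= dotvZl dotvZr mulrA -expr2 sqr_sqrtr // w1 mulr1.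
  exact: h2.
move: Ky1 => [+ _]; rewrite /g1 -scalemxAl Pid // dotvZl dotvZr mulrA -expr2 sqr_sqrtr // w1 mulr1.
lra.
Qed.

End Main.

Theorem theorem4p1 (R : realType) (n k : nat) (H : 'I_k -> 'M[R]_n)
  (hk : (0 < k)%N)
  (hdim : forall j, (1 <= \rank (H j))%N /\ (\rank (H j) <= n - 2)%N) :
  [<->
   (* (i) *)
   row_full (\sum_j perp (H j))%MS /\
   ~ (exists A : {set 'I_k}, A != finset.set0 /\ ~: A != finset.set0 /\
        forall i j, i \in A -> j \notin A -> orthsp (perp (H i)) (perp (H j)));
   (* (ii) *)
   (forall E : set 'rV[R]_n, E !=set0 -> closed (E : set 'rV[R^o]_n) -> E `<=` @sphere R n ->
      (forall j x y, E x -> (y - x <= perp (H j))%MS -> @sphere R n y -> E y) ->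
      E = @sphere R n);
   (* (iii) *)
   (forall F : set 'rV[R]_n, closed (F : set 'rV[R^o]_n) ->
      (forall j Q x, rotation Q -> fixes Q (H j) -> F x -> F (x *m Q)) ->
      forall x y, F x -> dotv y y = dotv x x -> F y);
   (* (iv) *)
   (forall K : set 'rV[R]_n, convex_body K ->
      (forall j, rot_symmetric (H j) K) ->
      exists r : R, 0 < r /\ K = [set y | dotv y y <= r ^+ 2])].
Proof.
tfae.
- exact: (i_ii hk hdim).
- by move=> h2; apply: (i_iii hk hdim); exact: (ii_i hk hdim h2).
- exact: (iii_iv hk hdim).
- exact: (iv_i hk hdim).
Qed.
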